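(* Let $\lambda_C$ and $\mathrm{VFS}$ be the calculi and $M\mapsto M^{\bullet}$ the VFS-translation described in the context. (1) Let $R\in\{B,\mathit{let}_v,\eta_{let}\}$. If $M\to_R N$ in $\lambda_C$ (one step of the compatible closure of rule $R$), then $M^{\bullet}\twoheadrightarrow N^{\bullet}$ in $\mathrm{VFS}$. (2) Let $R\in\{\mathit{let}_1,\mathit{let}_2,\mathit{assoc}\}$. If $M\to_R N$ in $\lambda_C$, then $M^{\bullet}= N^{\bullet}$ (syntactic equality up to $\alpha$-conversion) in $\mathrm{VFS}$.
   Context: All calculi below are untyped term calculi considered up to $\alpha$-conversion; $[V/x]M$ denotes capture-avoiding substitution; a one-step reduction relation $\to$ is the closure of the listed rules under all term constructors, and $\twoheadrightarrow$ is its reflexive-transitive closure. The computational $\lambda$-calculus $\lambda_C$: terms $M,N,P,Q::= V\mid MN\mid \mathsf{let}\,x:=M\,\mathsf{in}\,N$ (binding $x$ in $N$), values $V,W::=x\mid \lambda x.M$. Rules: $(B)$ $(\lambda x.M)N\to \mathsf{let}\,x:=N\,\mathsf{in}\,M$; $(\mathit{let}_v)$ $\mathsf{let}\,x:=V\,\mathsf{in}\,M\to[V/x]M$; $(\eta_{let})$ $\mathsf{let}\,x:=M\,\mathsf{in}\,x\to M$; $(\mathit{assoc})$ $\mathsf{let}\,y:=(\mathsf{let}\,x:=M\,\mathsf{in}\,N)\,\mathsf{in}\,P\to \mathsf{let}\,x:=M\,\mathsf{in}\,\mathsf{let}\,y:=N\,\mathsf{in}\,P$; $(\mathit{let}_1)$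 $MN\to\mathsf{let}\,x:=M\,\mathsf{in}\,xN$ if $M$ is not a value; $(\mathit{let}_2)$ $VN\to \mathsf{let}\,x:=N\,\mathsf{in}\,Vx$ if $N$ is not a value (with $x$ fresh). The calculus $\mathrm{VFS}$: terms $M,N::=\uparrow V\mid \mathsf{C}_v(V,c)$; values $V,W::=x\mid\lambda x.M$; formal contexts $c::= x.M\mid (W,x.M)$, where $x.M$ and $(W,x.M)$ bind $x$ in $M$. An auxiliary operation $\mathsf{C}_v(M:c')$ (a term) and $(c:c')$ (a formal context) is defined by simultaneous recursion: $\mathsf{C}_v(\uparrow V:c')=\mathsf{C}_v(V,c')$, $\mathsf{C}_v(\mathsf{C}_v(V,c):c')=\mathsf{C}_v(V,(c:c'))$, $((x.M):c')=x.\mathsf{C}_v(M:c')$, $((W,x.M):c')=(W,x.\mathsf{C}_v(M:c'))$. Rules: $(B_v)$ $\mathsf{C}_v(\lambda x.M,(V,y.N))\to \mathsf{C}_v(V,x.\mathsf{C}_v(M:y.N))$; $(\sigma_v)$ $\mathsf{C}_v(V,y.N)\to [V/y]N$. The VFS-translation from $\lambda_C$ to $\mathrm{VFS}$: $x^{\circ}=x$; $(\lambda x.M)^{\circ}=\lambda x.M^{\bullet}$; $M^{\bullet}=(M;x.\uparrow x)$; and for a $\lambda_C$-term $M$ and a $\mathrm{VFS}$-term $N$, the $\mathrm{VFS}$-term $(M;x.N)$ is defined by: $(V;x.N)=\mathsf{C}_v(V^{\circ},x.N)$; $(PQ;x.N)=(P;m.(mQ;x.N))$ if $P$ is not a value;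 $(VQ;x.N)=(Q;n.(Vn;x.N))$ if $Q$ is not a value; $(VW;x.N)=\mathsf{C}_v(V^{\circ},(W^{\circ},x.N))$; $(\mathsf{let}\,y:=M\,\mathsf{in}\,P;x.N)=(M;y.(P;x.N))$ (with $m,n$ fresh). *)

(* Defs.v *)
(* Terms are represented with de Bruijn indices, so syntactic
   equality of Rocq terms is equality up to alpha-conversion. *)
From Stdlib Require Import Arith Relations.

Inductive lterm : Type :=
| LVar : nat -> lterm
| LLam : lterm -> lterm
| LApp : lterm -> lterm -> lterm
| LLet : lterm -> lterm -> lterm.    (* let x := M in N, x = index 0 in N *)

Definition is_value (t : lterm) : bool :=
  match t with LVar _ | LLam _ => true | _ => false end.

Fixpoint lshift (c : nat) (t : lterm) : lterm :=
  match t with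
  | LVar j => LVar (if j <? c then j else S j)
  | LLam b => LLam (lshift (S c) b)
  | LApp p q => LApp (lshift c p) (lshift c q)
  | LLet m n => LLet (lshift c m) (lshift (S c) n)
  end.

Fixpoint lsubst (k : nat) (V : lterm) (t : lterm) : lterm :=
  match t with
  | LVar j => if j <? k then LVar j else if j =? k then V else LVar (pred j)
  | LLam b => LLam (lsubst (S k) (lshift 0 V) b)
  | LApp p q => LApp (lsubst k V p) (lsubst k V q)
  | LLet m n => LLet (lsubst k V m) (lsubst (S k) (lshift 0 V) n)
  end.

Inductive lrule : Type := RB | Rletv | Retalet | Rassoc | Rlet1 | Rlet2.

Inductive lroot : lrule -> lterm -> lterm -> Prop :=
| root_B : forall M N, lroot RB (LApp (LLam M) N) (LLet N M)
| root_letv : forall V M, is_value V = true -> lroot Rletv (LLet V M) (lsubst 0 V M)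
| root_eta : forall M, lroot Retalet (LLet M (LVar 0)) M
| root_assoc : forall M N P,
    lroot Rassoc (LLet (LLet M N) P) (LLet M (LLet N (lshift 1 P)))
| root_let1 : forall M N, is_value M = false ->
    lroot Rlet1 (LApp M N) (LLet M (LApp (LVar 0) (lshift 0 N)))
| root_let2 : forall V N, is_value V = true -> is_value N = false ->
    lroot Rlet2 (LApp V N) (LLet N (LApp (lshift 0 V) (LVar 0))).

Inductive lstep (R : lrule) : lterm -> lterm -> Prop :=
| ls_root : forall M N, lroot R M N -> lstep R M N
| ls_lam : forall M M', lstep R M M' -> lstep R (LLam M) (LLam M')
| ls_appl : forall M M' N, lstep R M M' -> lstep R (LApp M N) (LApp M' N)
| ls_appr : forall M N N', lstep R N N' -> lstep R (LApp M N) (LApp M N')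
| ls_letl : forall M M' N, lstep R M M' -> lstep R (LLet M N) (LLet M' N)
| ls_letr : forall M N N', lstep R N N' -> lstep R (LLet M N) (LLet M N').

Inductive vtm : Type :=
| Up : vval -> vtm
| Cv : vval -> vctx -> vtm
with vval : Type :=
| VVar : nat -> vval
| VLam : vtm -> vval
with vctx : Type :=
| CAbs : vtm -> vctx                 (* x.M, x = index 0 *)
| CPair : vval -> vtm -> vctx.       (* (W, x.M), x = index 0 in M *)

Fixpoint sh_tm (c : nat) (t : vtm) : vtm :=
  match t with
  | Up v => Up (sh_val c v)
  | Cv v k => Cv (sh_val c v) (sh_ctx c k)
  end
with sh_val (c : nat) (v : vval) : vval :=
  match v with
  | VVar j => VVar (if j <? c then j else S j)
  | VLam m => VLam (sh_tm (S c) m)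
  end
with sh_ctx (c : nat) (k : vctx) : vctx :=
  match k with
  | CAbs m => CAbs (sh_tm (S c) m)
  | CPair w m => CPair (sh_val c w) (sh_tm (S c) m)
  end.

Fixpoint su_tm (k : nat) (V : vval) (t : vtm) : vtm :=
  match t with
  | Up v => Up (su_val k V v)
  | Cv v c => Cv (su_val k V v) (su_ctx k V c)
  end
with su_val (k : nat) (V : vval) (v : vval) : vval :=
  match v with
  | VVar j => if j <? k then VVar j else if j =? k then V else VVar (pred j)
  | VLam m => VLam (su_tm (S k) (sh_val 0 V) m)
  end
with su_ctx (k : nat) (V : vval) (c : vctx) : vctx :=
  match c with
  | CAbs m => CAbs (su_tm (S k) (sh_val 0 V) m)
  | CPair w m => CPair (su_val k V w) (su_tm (S k) (sh_val 0 V) m)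
  end.

(* C_v(M : c') and (c : c'); c' is shifted when passing under the binder x *)
Fixpoint cat_tm (m : vtm) (c' : vctx) : vtm :=
  match m with
  | Up v => Cv v c'
  | Cv v c => Cv v (cat_ctx c c')
  end
with cat_ctx (c : vctx) (c' : vctx) : vctx :=
  match c with
  | CAbs m => CAbs (cat_tm m (sh_ctx 0 c'))
  | CPair w m => CPair w (cat_tm m (sh_ctx 0 c'))
  end.

Inductive vroot : vtm -> vtm -> Prop :=
| root_Bv : forall M V N,
    vroot (Cv (VLam M) (CPair V N)) (Cv V (CAbs (cat_tm M (sh_ctx 0 (CAbs N)))))
| root_sigmav : forall V N, vroot (Cv V (CAbs N)) (su_tm 0 V N).

Inductive vstep_tm : vtm -> vtm -> Prop :=
| vs_root : forall M N, vroot M N -> vstep_tm M N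
| vs_up : forall v v', vstep_val v v' -> vstep_tm (Up v) (Up v')
| vs_cvl : forall v v' c, vstep_val v v' -> vstep_tm (Cv v c) (Cv v' c)
| vs_cvr : forall v c c', vstep_ctx c c' -> vstep_tm (Cv v c) (Cv v c')
with vstep_val : vval -> vval -> Prop :=
| vs_lam : forall m m', vstep_tm m m' -> vstep_val (VLam m) (VLam m')
with vstep_ctx : vctx -> vctx -> Prop :=
| vs_abs : forall m m', vstep_tm m m' -> vstep_ctx (CAbs m) (CAbs m')
| vs_pairl : forall w w' m, vstep_val w w' -> vstep_ctx (CPair w m) (CPair w' m)
| vs_pairr : forall w m m', vstep_tm m m' -> vstep_ctx (CPair w m) (CPair w m').

Definition vstar : vtm -> vtm -> Prop := clos_refl_trans vtm vstep_tm.

Fixpoint lsize (t : lterm) : nat :=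
  match t with
  | LVar _ => 1
  | LLam b => S (lsize b)
  | LApp p q => S (lsize p + lsize q)
  | LLet m n => S (lsize m + lsize n)
  end.

(* tr n M N = (M; x.N) where N lives in the context extended by x (index 0),
   computed with fuel n; the fuel lsize M is always sufficient, see bullet. *)
Fixpoint tr (n : nat) (M : lterm) (N : vtm) : vtm :=
  match n with
  | O => N (* never reached with sufficient fuel *)
  | S n =>
    let vt (V : lterm) : vval :=
      match V with
      | LVar k => VVar k
      | LLam b => VLam (tr n b (Up (VVar 0)))
      | _ => VVar 0 (* unused: only applied to values *)
      end in
    match M with
    | LVar _ | LLam _ => Cv (vt M) (CAbs N)
    | LApp P Q =>
        if is_value P then
          if is_value Q then Cv (vt P) (CPair (vt Q) N)
          else (* (VQ; x.N) = (Q; n.(Vn; x.N)) *)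
            tr n Q (tr n (LApp (lshift 0 P) (LVar 0)) (sh_tm 1 N))
        else (* (PQ; x.N) = (P; m.(mQ; x.N)) *)
          tr n P (tr n (LApp (LVar 0) (lshift 0 Q)) (sh_tm 1 N))
    | LLet M1 P =>  (* (let y := M1 in P; x.N) = (M1; y.(P; x.N)) *)
        tr n M1 (tr n P (sh_tm 1 N))
    end
  end.

Definition bullet (M : lterm) : vtm := tr (lsize M) M (Up (VVar 0)).

(* Main.v *)
Require Import Defs.
From Stdlib Require Import Relations Arith Lia.

Ltac ncases := repeat (cbn -[Nat.ltb Nat.eqb] in *; match goal with
 | |- context [?a <? ?b] => destruct (Nat.ltb_spec a b)
 | |- context [?a =? ?b] => destruct (Nat.eqb_spec a b)
 end).
Ltac nsolve := ncases; try reflexivity; try (f_equal; lia); try (exfalso; lia); try (subst; reflexivity).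

Lemma L1 : forall t c c', c' <= c -> lshift (S c) (lshift c' t) = lshift c' (lshift c t).
Proof. induction t; intros; cbn -[Nat.ltb]; [nsolve| | |]; f_equal; first [apply IHt|apply IHt1|apply IHt2]; lia. Qed.

Lemma L2 : forall P c k V, c <= k -> lsubst (S k) (lshift c V) (lshift c P) = lshift c (lsubst k V P).
Proof.
  induction P; intros; cbn -[Nat.ltb Nat.eqb].
  - nsolve.
  - f_equal. rewrite <- IHP by lia. f_equal. symmetry; apply L1; lia.
  - f_equal; auto.
  - f_equal; auto. rewrite <- IHP2 by lia. f_equal. symmetry; apply L1; lia.
Qed.

Lemma L3 : forall t k V, lsubst k V (lshift k t) = t.
Proof. induction t; intros; cbn -[Nat.ltb]; [nsolve| | |]; f_equal; auto. Qed.

Lemma L4 : forall M c k V, k <= c -> lshift c (lsubst k V M) = lsubst k (lshift c V) (lshift (S c) M).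
Proof.
  induction M; intros; cbn -[Nat.ltb Nat.eqb].
  - nsolve.
  - f_equal. rewrite IHM by lia. f_equal. apply L1; lia.
  - f_equal; auto.
  - f_equal; auto. rewrite IHM2 by lia. f_equal. apply L1; lia.
Qed.

Scheme vtm_ind' := Induction for vtm Sort Prop
with vval_ind' := Induction for vval Sort Prop
with vctx_ind' := Induction for vctx Sort Prop.
Combined Scheme vmut from vtm_ind', vval_ind', vctx_ind'.

Lemma V1 :
  (forall t c c', c' <= c -> sh_tm (S c) (sh_tm c' t) = sh_tm c' (sh_tm c t)) /\
  (forall t c c', c' <= c -> sh_val (S c) (sh_val c' t) = sh_val c' (sh_val c t)) /\
  (forall t c c', c' <= c -> sh_ctx (S c) (sh_ctx c' t) = sh_ctx c' (sh_ctx c t)).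
Proof.
  apply vmut; intros; cbn -[Nat.ltb]; try nsolve; f_equal;
  repeat match goal with H : forall _ _, _ |- _ => rewrite H by lia; clear H end; reflexivity.
Qed.
Definition V1t := proj1 V1.
Definition V1v := proj1 (proj2 V1).
Definition V1c := proj2 (proj2 V1).

Lemma V2 :
  (forall t c k W, c <= k -> su_tm (S k) (sh_val c W) (sh_tm c t) = sh_tm c (su_tm k W t)) /\
  (forall t c k W, c <= k -> su_val (S k) (sh_val c W) (sh_val c t) = sh_val c (su_val k W t)) /\
  (forall t c k W, c <= k -> su_ctx (S k) (sh_val c W) (sh_ctx c t) = sh_ctx c (su_ctx k W t)).
Proof.
  apply vmut; intros; cbn -[Nat.ltb Nat.eqb]; try nsolve; f_equal;
  repeat match goal with H : forall _ _ _, _ |- _ => rewrite <- H by lia; clear H end;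
  try rewrite V1v by lia; reflexivity.
Qed.

Lemma V3 :
  (forall t k W, su_tm k W (sh_tm k t) = t) /\
  (forall t k W, su_val k W (sh_val k t) = t) /\
  (forall t k W, su_ctx k W (sh_ctx k t) = t).
Proof.
  apply vmut; intros; cbn -[Nat.ltb Nat.eqb]; try nsolve; f_equal; auto.
Qed.

Lemma V4 :
  (forall t k, su_tm k (VVar k) (sh_tm (S k) t) = t) /\
  (forall t k, su_val k (VVar k) (sh_val (S k) t) = t) /\
  (forall t k, su_ctx k (VVar k) (sh_ctx (S k) t) = t).
Proof.
  apply vmut; intros; cbn -[Nat.ltb Nat.eqb]; try nsolve; f_equal; auto.
Qed.

Lemma V5 :
  (forall t c d, sh_tm c (cat_tm t d) = cat_tm (sh_tm c t) (sh_ctx c d)) /\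
  (forall t : vval, True) /\
  (forall e c d, sh_ctx c (cat_ctx e d) = cat_ctx (sh_ctx c e) (sh_ctx c d)).
Proof.
  apply vmut; intros; cbn -[Nat.ltb Nat.eqb]; auto.
  - f_equal; auto.
  - f_equal. rewrite H. f_equal. apply V1c; lia.
  - f_equal. rewrite H0. f_equal. apply V1c; lia.
Qed.

Lemma V6 :
  (forall t c k W, k <= c -> sh_tm c (su_tm k W t) = su_tm k (sh_val c W) (sh_tm (S c) t)) /\
  (forall t c k W, k <= c -> sh_val c (su_val k W t) = su_val k (sh_val c W) (sh_val (S c) t)) /\
  (forall t c k W, k <= c -> sh_ctx c (su_ctx k W t) = su_ctx k (sh_val c W) (sh_ctx (S c) t)).
Proof.
  apply vmut; intros; cbn -[Nat.ltb Nat.eqb]; try nsolve; f_equal;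
  repeat match goal with H : forall _ _ _, _ |- _ => rewrite H by lia; clear H end;
  try rewrite V1v by lia; reflexivity.
Qed.

Definition V1tm := proj1 V1.
Scheme vst_ind := Induction for vstep_tm Sort Prop
with vsv_ind := Induction for vstep_val Sort Prop
with vsc_ind := Induction for vstep_ctx Sort Prop.
Combined Scheme vsmut from vst_ind, vsv_ind, vsc_ind.

Lemma vstep_sh :
  (forall t t', vstep_tm t t' -> forall c, vstep_tm (sh_tm c t) (sh_tm c t')) /\
  (forall t t', vstep_val t t' -> forall c, vstep_val (sh_val c t) (sh_val c t')) /\
  (forall t t', vstep_ctx t t' -> forall c, vstep_ctx (sh_ctx c t) (sh_ctx c t')).
Proof.
  apply vsmut; intros; cbn -[Nat.ltb]; try (constructor; auto; fail).
  destruct v; cbn -[Nat.ltb].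
  - rewrite (proj1 V5). cbn. rewrite (proj1 V1) by lia. apply vs_root, root_Bv.
  - rewrite (proj1 V6) by lia. apply vs_root, root_sigmav.
Qed.

Definition vstarv := clos_refl_trans vval vstep_val.

Lemma crt_map {A B} (R : relation A) (S : relation B) (f : A -> B) :
  (forall x y, R x y -> S (f x) (f y)) ->
  forall x y, clos_refl_trans A R x y -> clos_refl_trans B S (f x) (f y).
Proof.
  intros H x y Hxy; induction Hxy.
  - apply rt_step; auto.
  - apply rt_refl.
  - eapply rt_trans; eauto.
Qed.

Lemma vstar_sh : forall c t t', vstar t t' -> vstar (sh_tm c t) (sh_tm c t').
Proof. intros c. apply crt_map. intros; apply vstep_sh; auto. Qed.
Lemma vstarv_sh : forall c t t', vstarv t t' -> vstarv (sh_val c t) (sh_val c t').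
Proof. intros c. apply crt_map. intros; apply vstep_sh; auto. Qed.
Lemma vstar_lam : forall m m', vstar m m' -> vstarv (VLam m) (VLam m').
Proof. apply crt_map. intros; apply vs_lam; auto. Qed.
Lemma vstar_cvl : forall c v v', vstarv v v' -> vstar (Cv v c) (Cv v' c).
Proof. intros c. apply (crt_map _ _ (fun v => Cv v c)). intros; apply vs_cvl; auto. Qed.
Lemma vstar_abs : forall v m m', vstar m m' -> vstar (Cv v (CAbs m)) (Cv v (CAbs m')).
Proof. intros v. apply (crt_map _ _ (fun m => Cv v (CAbs m))). intros; apply vs_cvr, vs_abs; auto. Qed.
Lemma vstar_pairr : forall v w m m', vstar m m' -> vstar (Cv v (CPair w m)) (Cv v (CPair w m')).
Proof. intros v w. apply (crt_map _ _ (fun m => Cv v (CPair w m))). intros; apply vs_cvr, vs_pairr; auto. Qed.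
Lemma vstar_pairl : forall v m w w', vstarv w w' -> vstar (Cv v (CPair w m)) (Cv v (CPair w' m)).
Proof. intros v m. apply (crt_map _ _ (fun w => Cv v (CPair w m))). intros; apply vs_cvr; apply vs_pairl; auto. Qed.
Lemma vstar1 : forall t t', vroot t t' -> vstar t t'.
Proof. intros; apply rt_step, vs_root; auto. Qed.

Lemma lsize_pos : forall t, 1 <= lsize t.
Proof. destruct t; cbn; lia. Qed.
Lemma lshift_size : forall t c, lsize (lshift c t) = lsize t.
Proof. induction t; intros; cbn; auto. Qed.
Lemma nonval_size : forall t, is_value t = false -> 3 <= lsize t.
Proof. destruct t; cbn; intros; try discriminate; pose proof (lsize_pos t1); pose proof (lsize_pos t2); lia. Qed.
Lemma lshift_val : forall t c, is_value (lshift c t) = is_value t.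
Proof. destruct t; reflexivity. Qed.
Lemma lsubst_val : forall t k V, is_value V = true -> is_value (lsubst k V t) = is_value t.
Proof. destruct t; intros; cbn -[Nat.ltb Nat.eqb]; auto. ncases; auto. Qed.

Ltac sz := cbn [lsize] in *; rewrite ?lshift_size in *; cbn [lsize] in *;
  repeat match goal with t : lterm |- _ =>
    lazymatch goal with _ : 1 <= lsize t |- _ => fail | _ => pose proof (lsize_pos t) end end;
  lia.

Lemma tr_fuel_gen : forall n m M K, lsize M <= n -> lsize M <= m -> tr n M K = tr m M K.
Proof.
  induction n; intros m M K Hn Hm; [pose proof (lsize_pos M); lia|].
  destruct m; [pose proof (lsize_pos M); lia|].
  destruct M; cbn [tr].
  - reflexivity.
  - rewrite (IHn m) by sz. reflexivity.
  - destruct M1; destruct M2; cbn [is_value];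
    repeat match goal with |- context [tr n ?A ?B] => rewrite (IHn m A B) by sz end;
    reflexivity.
  - repeat match goal with |- context [tr n ?A ?B] => rewrite (IHn m A B) by sz end;
    reflexivity.
Qed.

Definition T M K := tr (lsize M) M K.
Arguments T : simpl never.
Lemma tr_fuel : forall n M K, lsize M <= n -> tr n M K = T M K.
Proof. intros; apply tr_fuel_gen; auto. Qed.

Definition vt (V : lterm) : vval :=
  match V with
  | LVar k => VVar k
  | LLam b => VLam (T b (Up (VVar 0)))
  | _ => VVar 0
  end.

Ltac fuel := repeat match goal with |- context [tr ?n ?A ?B] =>
  lazymatch n with lsize A => fail | _ => rewrite (tr_fuel n A B) by sz end end.

Lemma T_value : forall V K, is_value V = true -> T V K = Cv (vt V) (CAbs K).
Proof. destruct V; intros; try discriminate; unfold T; cbn [lsize tr]; fuel; reflexivity. Qed.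

Lemma T_let : forall M P K, T (LLet M P) K = T M (T P (sh_tm 1 K)).
Proof. intros; unfold T at 1; cbn [lsize tr]; fuel; reflexivity. Qed.

Lemma T_app_vv : forall P Q K, is_value P = true -> is_value Q = true ->
  T (LApp P Q) K = Cv (vt P) (CPair (vt Q) K).
Proof. destruct P, Q; intros; try discriminate; unfold T at 1; cbn [lsize tr is_value]; fuel; reflexivity. Qed.

Lemma T_app_vn : forall P Q K, is_value P = true -> is_value Q = false ->
  T (LApp P Q) K = T Q (T (LApp (lshift 0 P) (LVar 0)) (sh_tm 1 K)).
Proof. destruct P, Q; intros; try discriminate; unfold T at 1; cbn [lsize tr is_value]; fuel; reflexivity. Qed.

Lemma T_app_n : forall P Q K, is_value P = false ->
  T (LApp P Q) K = T P (T (LApp (LVar 0) (lshift 0 Q)) (sh_tm 1 K)).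
Proof. destruct P, Q; intros; try discriminate; unfold T at 1; cbn [lsize tr is_value]; fuel; reflexivity. Qed.

Lemma T_app_v0 : forall V K, is_value V = true -> T (LApp V (LVar 0)) K = Cv (vt V) (CPair (VVar 0) K).
Proof. intros; apply T_app_vv; auto. Qed.

Lemma size_ind (P : lterm -> Prop) :
  (forall M, (forall M', lsize M' < lsize M -> P M') -> P M) -> forall M, P M.
Proof.
  intros H M. remember (lsize M) as n eqn:E. revert M E.
  induction n as [n IH] using lt_wf_ind. intros; apply H; intros; subst; eapply IH; eauto.
Qed.

Lemma Tsh : forall M, (forall c K, sh_tm c (T M K) = T (lshift c M) (sh_tm (S c) K)) /\
  (is_value M = true -> forall c, sh_val c (vt M) = vt (lshift c M)).
Proof.
  induction M as [M IH] using size_ind.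
  assert (HV : is_value M = true -> forall c, sh_val c (vt M) = vt (lshift c M)).
  { intros Hv c. destruct M; try discriminate; cbn -[Nat.ltb]; auto.
    f_equal. rewrite (proj1 (IH M ltac:(sz))). reflexivity. }
  split; [|exact HV]. intros c K.
  destruct M.
  - rewrite !T_value by reflexivity. rewrite <- HV by reflexivity. reflexivity.
  - rewrite !T_value by reflexivity. rewrite <- HV by reflexivity. reflexivity.
  - cbn [lshift]. destruct (is_value M1) eqn:E1; [destruct (is_value M2) eqn:E2|].
    + rewrite (T_app_vv M1), (T_app_vv (lshift c M1)) by (rewrite ?lshift_val; auto). cbn.
      rewrite (proj2 (IH M1 ltac:(sz))), (proj2 (IH M2 ltac:(sz))) by auto. reflexivity.
    + rewrite (T_app_vn M1), (T_app_vn (lshift c M1)) by (rewrite ?lshift_val; auto).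
      rewrite (proj1 (IH M2 ltac:(sz))).
      pose proof (nonval_size _ E2).
      rewrite (proj1 (IH (LApp (lshift 0 M1) (LVar 0)) ltac:(sz))).
      cbn [lshift]. replace (0 <? S c) with true by reflexivity.
      rewrite ?L1 by lia. rewrite V1tm by lia. reflexivity.
    + rewrite (T_app_n M1), (T_app_n (lshift c M1)) by (rewrite ?lshift_val; auto).
      rewrite (proj1 (IH M1 ltac:(sz))).
      pose proof (nonval_size _ E1).
      rewrite (proj1 (IH (LApp (LVar 0) (lshift 0 M2)) ltac:(sz))).
      cbn [lshift]. replace (0 <? S c) with true by reflexivity.
      rewrite ?L1 by lia. rewrite V1tm by lia. reflexivity.
  - cbn [lshift]. rewrite !T_let.
    rewrite (proj1 (IH M1 ltac:(sz))), (proj1 (IH M2 ltac:(sz))).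
    rewrite V1tm by lia. reflexivity.
Qed.

Lemma vt_sh : forall V c, is_value V = true -> vt (lshift c V) = sh_val c (vt V).
Proof. intros. symmetry. apply (proj2 (Tsh V)); auto. Qed.

Lemma H2 : forall W k K, su_tm (S (S k)) (sh_val 0 (sh_val 0 W)) (sh_tm 1 K) = sh_tm 1 (su_tm (S k) (sh_val 0 W) K).
Proof. intros. rewrite <- (V1v W 0 0) by lia. apply (proj1 V2). lia. Qed.

Lemma Tsub : forall M k V, is_value V = true ->
  (forall K, su_tm k (vt V) (T M K) = T (lsubst k V M) (su_tm (S k) (sh_val 0 (vt V)) K)) /\
  (is_value M = true -> su_val k (vt V) (vt M) = vt (lsubst k V M)).
Proof.
  induction M as [M IH] using size_ind. intros k V HV.
  assert (HV0 : is_value (lshift 0 V) = true) by (rewrite lshift_val; auto).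
  assert (IHs : forall X K, lsize X < lsize M ->
     su_tm (S k) (sh_val 0 (vt V)) (T X K) = T (lsubst (S k) (lshift 0 V) X) (su_tm (S (S k)) (sh_val 0 (sh_val 0 (vt V))) K)).
  { intros X K HX. rewrite <- vt_sh by auto. rewrite (proj1 (IH X HX (S k) (lshift 0 V) HV0)).
    rewrite vt_sh by auto. reflexivity. }
  assert (HVal : is_value M = true -> su_val k (vt V) (vt M) = vt (lsubst k V M)).
  { intros Hm. destruct M; try discriminate.
    - cbn -[Nat.ltb Nat.eqb]. ncases; reflexivity.
    - cbn -[Nat.ltb Nat.eqb T]. f_equal. rewrite IHs by sz. reflexivity. }
  split; [|exact HVal]. intros K.
  destruct M.
  - rewrite (T_value (LVar n)), T_value; auto.
    2:{ cbn -[Nat.ltb Nat.eqb]. ncases; auto. }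
    rewrite <- HVal by reflexivity. reflexivity.
  - rewrite (T_value (LLam M)), T_value; auto. rewrite <- HVal by reflexivity. reflexivity.
  - cbn [lsubst]. destruct (is_value M1) eqn:E1; [destruct (is_value M2) eqn:E2|].
    + rewrite (T_app_vv M1), (T_app_vv (lsubst k V M1)) by (rewrite ?lsubst_val; auto). cbn.
      rewrite (proj2 (IH M1 ltac:(sz) k V HV)), (proj2 (IH M2 ltac:(sz) k V HV)) by auto. reflexivity.
    + rewrite (T_app_vn M1), (T_app_vn (lsubst k V M1)) by (rewrite ?lsubst_val; auto).
      rewrite (proj1 (IH M2 ltac:(sz) k V HV)).
      pose proof (nonval_size _ E2).
      rewrite IHs by sz. cbn [lsubst]. replace (0 <? S k) with true by reflexivity.
      rewrite L2 by lia. rewrite H2. reflexivity.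
    + rewrite (T_app_n M1), (T_app_n (lsubst k V M1)) by (rewrite ?lsubst_val; auto).
      rewrite (proj1 (IH M1 ltac:(sz) k V HV)).
      pose proof (nonval_size _ E1).
      rewrite IHs by sz. cbn [lsubst]. replace (0 <? S k) with true by reflexivity.
      rewrite L2 by lia. rewrite H2. reflexivity.
  - cbn [lsubst]. rewrite !T_let.
    rewrite (proj1 (IH M1 ltac:(sz) k V HV)), IHs by sz. rewrite H2. reflexivity.
Qed.

Lemma Tcat : forall M L d, cat_tm (T M L) d = T M (cat_tm L (sh_ctx 0 d)).
Proof.
  induction M as [M IH] using size_ind. intros L d.
  assert (Hsh : forall L, sh_tm 1 (cat_tm L (sh_ctx 0 d)) = cat_tm (sh_tm 1 L) (sh_ctx 0 (sh_ctx 0 d))).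
  { intros. rewrite (proj1 V5). f_equal. apply V1c; lia. }
  destruct M.
  - repeat rewrite T_value by reflexivity. reflexivity.
  - repeat rewrite T_value by reflexivity. reflexivity.
  - destruct (is_value M1) eqn:E1; [destruct (is_value M2) eqn:E2|].
    + repeat rewrite (T_app_vv M1 M2) by auto. reflexivity.
    + repeat rewrite (T_app_vn M1 M2) by auto. pose proof (nonval_size _ E2).
      rewrite IH, IH by sz. rewrite Hsh. reflexivity.
    + repeat rewrite (T_app_n M1 M2) by auto. pose proof (nonval_size _ E1).
      rewrite IH, IH by sz. rewrite Hsh. reflexivity.
  - rewrite !T_let. rewrite IH, IH by sz. rewrite Hsh. reflexivity.
Qed.

Lemma Tcong : forall M K K', vstar K K' -> vstar (T M K) (T M K').
Proof.
  induction M as [M IH] using size_ind. intros K K' HK.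
  destruct M.
  - repeat rewrite T_value by reflexivity. apply vstar_abs; auto.
  - repeat rewrite T_value by reflexivity. apply vstar_abs; auto.
  - destruct (is_value M1) eqn:E1; [destruct (is_value M2) eqn:E2|].
    + repeat rewrite (T_app_vv M1 M2) by auto. apply vstar_pairr; auto.
    + repeat rewrite (T_app_vn M1 M2) by auto. pose proof (nonval_size _ E2).
      apply IH; [sz|]. apply IH; [sz|]. apply vstar_sh; auto.
    + repeat rewrite (T_app_n M1 M2) by auto. pose proof (nonval_size _ E1).
      apply IH; [sz|]. apply IH; [sz|]. apply vstar_sh; auto.
  - rewrite !T_let. apply IH; [sz|]. apply IH; [sz|]. apply vstar_sh; auto.
Qed.

Lemma T_eta : forall M K, vstar (T M (Cv (VVar 0) (CAbs (sh_tm 1 K)))) (T M K).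
Proof.
  intros. apply Tcong. apply vstar1. pattern K at 2. rewrite <- (proj1 V4 K 0). apply root_sigmav.
Qed.

Lemma catT_eta : forall b K, vstar (cat_tm (T b (Up (VVar 0))) (CAbs K)) (T b K).
Proof. intros. rewrite Tcat. apply T_eta. Qed.

Lemma lstep_sh : forall R M N, lstep R M N -> forall c, lstep R (lshift c M) (lshift c N).
Proof.
  induction 1; intros c; cbn [lshift].
  - apply ls_root. destruct H; cbn [lshift].
    + apply root_B.
    + rewrite L4 by lia. apply root_letv. rewrite lshift_val; auto.
    + replace (lshift (S c) (LVar 0)) with (LVar 0) by reflexivity. apply root_eta.
    + rewrite L1 by lia. apply root_assoc.
    + rewrite L1 by lia. replace (lshift (S c) (LVar 0)) with (LVar 0) by reflexivity.
      apply root_let1. rewrite lshift_val; auto.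
    + rewrite L1 by lia. replace (lshift (S c) (LVar 0)) with (LVar 0) by reflexivity.
      apply root_let2; rewrite lshift_val; auto.
  - apply ls_lam; auto.
  - apply ls_appl; auto.
  - apply ls_appr; auto.
  - apply ls_letl; auto.
  - apply ls_letr; auto.
Qed.

Lemma lstep_val : forall R M N, lstep R M N -> is_value M = true ->
  exists b b', M = LLam b /\ N = LLam b' /\ lstep R b b'.
Proof.
  intros R M N H Hv. destruct H; try discriminate.
  - destruct H; discriminate.
  - eauto.
Qed.

Lemma lstep_nval : forall R M N, (R = Rlet1 \/ R = Rlet2 \/ R = Rassoc) -> lstep R M N ->
  is_value N = is_value M.
Proof.
  intros R M N HR H. destruct H; try reflexivity.
  destruct H; try reflexivity; exfalso; intuition discriminate.
Qed.

Lemma P2 : forall R, (R = Rlet1 \/ R = Rlet2 \/ R = Rassoc) ->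
  forall M N, lstep R M N -> (forall K, T M K = T N K) /\ vt M = vt N.
Proof.
  intros R HR M. induction M as [M IH] using size_ind. intros N H.
  inversion H; subst.
  - destruct H0; try (exfalso; intuition discriminate); split; try reflexivity; intros K.
    + rewrite !T_let. rewrite (proj1 (Tsh P)). rewrite V1tm by lia. reflexivity.
    + rewrite T_app_n, T_let by auto. reflexivity.
    + rewrite T_app_vn, T_let by auto. reflexivity.
  - destruct (IH M0 ltac:(sz) M' H0) as [IH1 _].
    split; [|cbn; f_equal; auto].
    intros K. rewrite !T_value by reflexivity. cbn. rewrite IH1. reflexivity.
  - destruct (IH M0 ltac:(sz) M' H0) as [IH1 IH2].
    pose proof (lstep_nval _ _ _ HR H0) as Ev.
    split; [|reflexivity]. intros K.
    destruct (is_value M0) eqn:E1; [destruct (is_value N0) eqn:E2|].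
    + rewrite (T_app_vv M0), (T_app_vv M') by auto. rewrite IH2. reflexivity.
    + rewrite (T_app_vn M0), (T_app_vn M') by auto.
      rewrite !T_app_v0 by (rewrite lshift_val; auto).
      rewrite !vt_sh by auto. rewrite IH2. reflexivity.
    + rewrite (T_app_n M0), (T_app_n M') by auto. apply IH1.
  - destruct (IH N0 ltac:(sz) N' H0) as [IH1 IH2].
    pose proof (lstep_nval _ _ _ HR H0) as Ev.
    split; [|reflexivity]. intros K.
    destruct (is_value M0) eqn:E1; [destruct (is_value N0) eqn:E2|].
    + rewrite (T_app_vv M0 N0), (T_app_vv M0 N') by auto. rewrite IH2. reflexivity.
    + rewrite (T_app_vn M0 N0), (T_app_vn M0 N') by auto. apply IH1.
    + rewrite (T_app_n M0 N0), (T_app_n M0 N') by auto. f_equal.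
      pose proof (nonval_size _ E1).
      apply (IH (LApp (LVar 0) (lshift 0 N0)) ltac:(sz)). apply ls_appr, lstep_sh; auto.
  - destruct (IH M0 ltac:(sz) M' H0) as [IH1 IH2].
    split; [|reflexivity]. intros K. rewrite !T_let. apply IH1.
  - destruct (IH N0 ltac:(sz) N' H0) as [IH1 IH2].
    split; [|reflexivity]. intros K. rewrite !T_let. rewrite IH1. reflexivity.
Qed.

Lemma P1 : forall R, (R = RB \/ R = Rletv \/ R = Retalet) ->
  forall M N, lstep R M N -> (forall K, vstar (T M K) (T N K)) /\
    (is_value M = true -> vstarv (vt M) (vt N)).
Proof.
  intros R HR M. induction M as [M IH] using size_ind. intros N H.
  inversion H; subst.
  - split; [|destruct H0; discriminate].
    intros K. destruct H0; try (exfalso; intuition discriminate).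
    +
      destruct (is_value N) eqn:E2.
      * rewrite (T_app_vv (LLam M) N), T_let, (T_value N) by auto. cbn [vt].
        eapply rt_trans; [apply vstar1, root_Bv|]. apply vstar_abs. cbn [sh_ctx]. apply catT_eta.
      * rewrite (T_app_vn (LLam M) N), T_let by auto. apply Tcong.
        rewrite T_app_v0 by reflexivity. cbn [lshift vt].
        replace (T (lshift 1 M) (Up (VVar 0))) with (sh_tm 1 (T M (Up (VVar 0))))
          by (rewrite (proj1 (Tsh M)); reflexivity).
        eapply rt_trans; [apply vstar1, root_Bv|].
        eapply rt_trans; [apply vstar1, root_sigmav|].
        replace (sh_ctx 0 (CAbs (sh_tm 1 K))) with (sh_ctx 1 (CAbs (sh_tm 1 K)))
          by (cbn; f_equal; first [apply V1tm; lia | symmetry; apply V1tm; lia]).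
        rewrite <- (proj1 V5). rewrite (proj1 V4). apply catT_eta.
    +
      rewrite T_let, (T_value V) by auto.
      eapply rt_trans; [apply vstar1, root_sigmav|].
      rewrite (proj1 (Tsub M 0 V H0)). rewrite (proj1 V3). apply rt_refl.
    +
      rewrite T_let, (T_value (LVar 0)) by auto. cbn [vt]. apply T_eta.
  - destruct (IH M0 ltac:(sz) M' H0) as [IH1 _].
    assert (Hv : vstarv (vt (LLam M0)) (vt (LLam M'))) by (cbn [vt]; apply vstar_lam; apply IH1).
    split; [|auto]. intros K. rewrite !T_value by reflexivity. apply vstar_cvl; auto.
  - destruct (IH M0 ltac:(sz) M' H0) as [IH1 IH2].
    split; [|discriminate]. intros K.
    destruct (is_value M0) eqn:E1.
    + destruct (lstep_val _ _ _ H0 E1) as (b & b' & -> & -> & _).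
      specialize (IH2 eq_refl).
      destruct (is_value N0) eqn:E2.
      * rewrite (T_app_vv (LLam b) N0), (T_app_vv (LLam b') N0) by auto. apply vstar_cvl; auto.
      * rewrite (T_app_vn (LLam b) N0), (T_app_vn (LLam b') N0) by auto. apply Tcong.
        rewrite !T_app_v0 by reflexivity. rewrite !vt_sh by reflexivity.
        apply vstar_cvl, vstarv_sh, IH2.
    + destruct (is_value M') eqn:E3.
      * rewrite (T_app_n M0) by auto. eapply rt_trans; [apply IH1|].
        rewrite (T_value M') by auto.
        eapply rt_trans; [apply vstar1, root_sigmav|].
        rewrite (proj1 (Tsub _ 0 M' E3)). cbn [lsubst]. cbn -[T].
        rewrite L3, (proj1 V3). apply rt_refl.
      * rewrite (T_app_n M0), (T_app_n M') by auto. apply IH1.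
  - destruct (IH N0 ltac:(sz) N' H0) as [IH1 IH2].
    split; [|discriminate]. intros K.
    destruct (is_value M0) eqn:E1.
    + destruct (is_value N0) eqn:E2.
      * destruct (lstep_val _ _ _ H0 E2) as (b & b' & -> & -> & _).
        specialize (IH2 eq_refl).
        rewrite (T_app_vv M0 (LLam b)), (T_app_vv M0 (LLam b')) by auto. apply vstar_pairl; auto.
      * destruct (is_value N') eqn:E3.
        -- rewrite (T_app_vn M0 N0) by auto. eapply rt_trans; [apply IH1|].
           rewrite (T_value N') by auto.
           eapply rt_trans; [apply vstar1, root_sigmav|].
           rewrite (proj1 (Tsub _ 0 N' E3)). cbn [lsubst]. cbn -[T].
           rewrite L3, (proj1 V3). apply rt_refl.
        -- rewrite (T_app_vn M0 N0), (T_app_vn M0 N') by auto. apply IH1.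
    + rewrite (T_app_n M0 N0), (T_app_n M0 N') by auto. apply Tcong.
      pose proof (nonval_size _ E1).
      apply (IH (LApp (LVar 0) (lshift 0 N0)) ltac:(sz)). apply ls_appr, lstep_sh; auto.
  - destruct (IH M0 ltac:(sz) M' H0) as [IH1 IH2].
    split; [|discriminate]. intros K. rewrite !T_let. apply IH1.
  - destruct (IH N0 ltac:(sz) N' H0) as [IH1 IH2].
    split; [|discriminate]. intros K. rewrite !T_let. apply Tcong, IH1.
Qed.

Theorem theorem1 :
  (forall (R : lrule) (M N : lterm),
      (R = RB \/ R = Rletv \/ R = Retalet) ->
      lstep R M N -> vstar (bullet M) (bullet N)) /\
  (forall (R : lrule) (M N : lterm),
      (R = Rlet1 \/ R = Rlet2 \/ R = Rassoc) ->
      lstep R M N -> bullet M = bullet N).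
Proof.
  split; intros R M N HR H.
  - exact (proj1 (P1 R HR M N H) (Up (VVar 0))).
  - exact (proj1 (P2 R HR M N H) (Up (VVar 0))).
Qed.
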